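(* Let $s>0$ and let $c$ be a constant. Suppose $g\in C^1[s,\infty)$ satisfies $$g'(t)=-g(t)+\frac1t\int_s^t g(\xi)\,d\xi+\frac ct,\qquad t\in[s,\infty).$$ Then for all $t\ge s$, $$g(t)=g'(s)\,s\,e^{s}\,I(t,s)+g(s),$$ where $g'(s)=-g(s)+c\,s^{-1}$.
   Context: $I(t,s)=\int_s^t \frac{e^{-\xi}}{\xi}\,d\xi$. *)

(* Defs.v *)
From Stdlib Require Import Reals.
From Coquelicot Require Import Coquelicot.
Open Scope R_scope.

Definition I (t s : R) : R := RInt (fun xi => exp (- xi) / xi) s t.

Definition continuous_on_Ici (f : R -> R) (s : R) : Prop :=
  forall t, s <= t ->
    filterlim f (within (fun x => s <= x) (locally t)) (locally (f t)).

(* g is C^1 on [s, +oo) with derivative dg: g is continuous on [s,+oo),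
   differentiable on (s,+oo) with derivative dg, and dg extends continuously
   to [s,+oo) (so dg s is the one-sided derivative at s). *)
Definition C1_Ici (g dg : R -> R) (s : R) : Prop :=
  continuous_on_Ici g s /\ continuous_on_Ici dg s /\
  (forall t, s < t -> is_derive g t (dg t)).

(* Main.v *)
Require Import Defs.
From Stdlib Require Import Reals Lra.
From Coquelicot Require Import Coquelicot.
Open Scope R_scope.

Lemma Rmax_lip s x y : Rabs (Rmax s y - Rmax s x) <= Rabs (y - x).
Proof.
  unfold Rmax; destruct (Rle_dec s y); destruct (Rle_dec s x);
  unfold Rabs; repeat destruct Rcase_abs; lra.
Qed.

Lemma cont_max (f : R -> R) s x :
  filterlim f (within (fun y => s <= y) (locally (Rmax s x))) (locally (f (Rmax s x))) ->
  continuous (fun y => f (Rmax s y)) x.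
Proof.
  intros H. unfold continuous.
  eapply filterlim_comp; [|exact H].
  intros P [eps HP]. exists eps. intros y Hy. apply HP.
  - change (Rabs (Rmax s y - Rmax s x) < eps).
    change (Rabs (y - x) < eps) in Hy.
    pose proof (Rmax_lip s x y). lra.
  - apply Rmax_l.
Qed.

Lemma cont_within (f : R -> R) D a :
  continuous f a -> filterlim f (within D (locally a)) (locally (f a)).
Proof.
  intros H P HP. apply H in HP. destruct HP as [e He]. exists e. intros y Hy _. apply He, Hy.
Qed.

Lemma is_derive_eq (f : R -> R) x l l' : is_derive f x l -> l = l' -> is_derive f x l'.
Proof. intros H ->; exact H. Qed.

Lemma loc_gt s x : s < x -> locally x (fun y => s < y).
Proof. intros H. apply (open_gt s x H). Qed.

Lemma const_lem (F : R -> R) s :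
  continuous (fun x => F (Rmax s x)) s ->
  (forall t, s < t -> is_derive F t 0) -> forall t, s <= t -> F t = F s.
Proof.
  intros Hc Hd t Ht.
  set (Fm := fun x => F (Rmax s x)).
  assert (HD : forall x, s < x -> is_derive Fm x 0).
  { intros x Hx. eapply is_derive_ext_loc; [|apply (Hd x Hx)].
    eapply filter_imp; [|apply (loc_gt s x Hx)]. intros y Hy. unfold Fm.
    rewrite Rmax_right; lra. }
  assert (pr : forall x, s < x < t -> derivable_pt Fm x).
  { intros x Hx. exists 0. apply is_derive_Reals, HD; lra. }
  assert (E := null_derivative_loc Fm s t pr).
  assert (Fm t = Fm s).
  { apply E.
    - intros x Hx. apply continuity_pt_filterlim.
      destruct (Req_dec x s) as [->|Hne].
      + exact Hc.
      + apply (ex_derive_continuous (K:=R_AbsRing) (V:=R_NormedModule)). exists 0. apply HD. lra.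
    - intros x P. apply derive_pt_eq_0. apply is_derive_Reals, HD; lra.
    - lra. }
  unfold Fm in H. rewrite Rmax_right in H by lra. rewrite Rmax_left in H by lra. exact H.
Qed.

Lemma I_derive s t : 0 < s -> 0 < t -> is_derive (fun u => I u s) t (exp (- t) / t).
Proof.
  intros Hs Ht. unfold I.
  set (f := fun xi => exp (- xi) / xi).
  assert (Hc : forall z, 0 < z -> continuous f z).
  { intros z Hz. apply (ex_derive_continuous (K:=R_AbsRing) (V:=R_NormedModule)).
    unfold f. auto_derive. lra. }
  change (exp (- t) / t) with (f t).
  apply (is_derive_RInt f (fun u => RInt f s u) s t); [|apply Hc; lra].
  eapply filter_imp; [|apply (loc_gt 0 t Ht)].
  intros b Hb. apply (RInt_correct (V:=R_CompleteNormedModule)), (ex_RInt_continuous (V:=R_CompleteNormedModule)).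
  intros z Hz. apply Hc.
  assert (0 < Rmin s b) by (apply Rmin_glb_lt; lra). lra.
Qed.

Theorem lemma1 (s c : R) (g dg : R -> R) :
  0 < s ->
  C1_Ici g dg s ->
  (forall t, s <= t ->
     dg t = - g t + (1 / t) * RInt g s t + c / t) ->
  (forall t, s <= t -> g t = dg s * s * exp s * I t s + g s)
  /\ dg s = - g s + c / s.
Proof.
  intros Hs [Hgc [Hdgc Hd]] Heq.
  assert (Hds : dg s = - g s + c / s).
  { rewrite (Heq s) by lra. rewrite (RInt_point s g). change (zero : R) with 0. field. lra. }
  split; [|exact Hds].
  set (gt := fun y => g (Rmax s y)).
  assert (Hgt : forall x, continuous gt x).
  { intros x. apply cont_max. apply Hgc. apply Rmax_l. }
  assert (Hdgt : forall x, continuous (fun y => dg (Rmax s y)) x).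
  { intros x. apply cont_max. apply Hdgc. apply Rmax_l. }
  assert (HRI : forall t, s <= t -> RInt g s t = RInt gt s t).
  { intros t Ht. apply RInt_ext. intros x Hx. unfold gt. rewrite Rmax_right; [reflexivity|].
    rewrite Rmin_left in Hx by lra. lra. }
  assert (HdR : forall t, is_derive (RInt gt s) t (gt t)).
  { intros t. apply (is_derive_RInt gt (RInt gt s) s t); [|apply Hgt].
    apply filter_forall. intros b. apply (RInt_correct (V:=R_CompleteNormedModule)), (ex_RInt_continuous (V:=R_CompleteNormedModule)). intros; apply Hgt. }
  assert (Hmax : continuous (fun y => Rmax s y) s).
  { apply (cont_max (fun y => y)). rewrite Rmax_left by lra. apply cont_within. apply continuous_id. }
  set (K := fun t => t * dg t * exp t).
  assert (HK : forall t, s <= t -> K t = K s).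
  { apply const_lem.
    - unfold K.
      apply (continuous_mult (fun y => Rmax s y * dg (Rmax s y)) (fun y => exp (Rmax s y))).
      + apply (continuous_mult (fun y => Rmax s y) (fun y => dg (Rmax s y))); auto.
      + apply (continuous_comp (fun y => Rmax s y) exp); auto.
        apply (ex_derive_continuous (K:=R_AbsRing) (V:=R_NormedModule)). auto_derive. auto.
    - intros t Ht.
      set (H := fun y => (- y * g y + RInt gt s y + c) * exp y).
      apply (is_derive_ext_loc H).
      { assert (HHK : forall y : R, s < y -> H y = K y).
        { intros y Hy. unfold H, K. rewrite (Heq y) by lra. rewrite (HRI y) by lra. field. lra. }
        eapply filter_imp; [|apply (loc_gt s t Ht)]. intros y Hy. apply HHK, Hy. }
      unfold H.
      assert (D1 : is_derive (fun y : R => - y) t (-1)).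
      { apply (is_derive_opp (fun y : R => y) t 1). apply (is_derive_id (K:=R_AbsRing)). }
      assert (D2 : is_derive (fun y : R => - y * g y) t (-1 * g t + - t * dg t)).
      { exact (is_derive_mult (fun y : R => - y) g t (-1) (dg t) D1 (Hd t Ht) Rmult_comm). }
      assert (D3 : is_derive (fun y : R => - y * g y + RInt gt s y) t (-1 * g t + - t * dg t + gt t)).
      { exact (is_derive_plus (fun y : R => - y * g y) (RInt gt s) t _ _ D2 (HdR t)). }
      assert (D4 : is_derive (fun y : R => - y * g y + RInt gt s y + c) t (-1 * g t + - t * dg t + gt t + 0)).
      { exact (is_derive_plus (fun y : R => - y * g y + RInt gt s y) (fun _ => c) t _ _ D3 (is_derive_const c t)). }
      assert (D5 : is_derive (fun y : R => (- y * g y + RInt gt s y + c) * exp y) t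
         ((-1 * g t + - t * dg t + gt t + 0) * exp t + (- t * g t + RInt gt s t + c) * exp t)).
      { exact (is_derive_mult (fun y : R => - y * g y + RInt gt s y + c) exp t _ _ D4 (is_derive_exp t) Rmult_comm). }
      eapply is_derive_eq; [exact D5|].
      rewrite (Heq t) by lra. rewrite (HRI t) by lra.
      replace (gt t) with (g t) by (unfold gt; rewrite Rmax_right by lra; reflexivity).
      match goal with |- ?a = ?b => change (@eq R a b) end. field. lra. }
  set (C := dg s * s * exp s).
  set (L := fun t => g t - C * I t s).
  assert (HL : forall t, s <= t -> L t = L s).
  { apply const_lem.
    - unfold L.
      apply (continuous_minus (fun y => g (Rmax s y)) (fun y => C * I (Rmax s y) s)).
      + apply Hgt.
      + apply (continuous_scal_r C (fun y => I (Rmax s y) s)).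
        apply (continuous_comp (fun y => Rmax s y) (fun u => I u s)); auto.
        apply (ex_derive_continuous (K:=R_AbsRing) (V:=R_NormedModule)).
        eexists. apply I_derive; [lra|]. rewrite Rmax_left; lra.
    - intros t Ht. unfold L.
      assert (D1 : is_derive (fun u : R => C * I u s) t (C * (exp (- t) / t))).
      { exact (is_derive_scal (fun u : R => I u s) t C _ (I_derive s t Hs (Rlt_trans _ _ _ Hs Ht))). }
      assert (D2 : is_derive (fun u : R => g u - C * I u s) t (dg t - C * (exp (- t) / t))).
      { exact (is_derive_minus g (fun u : R => C * I u s) t _ _ (Hd t Ht) D1). }
      eapply is_derive_eq; [exact D2|].
      assert (Kt := HK t (Rlt_le _ _ Ht)). unfold K in Kt.
      unfold C.
      assert (exp (- t) * exp t = 1) by (rewrite <- exp_plus; replace (-t+t) with 0 by ring; apply exp_0).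
      assert (exp t > 0) by apply exp_pos.
      replace (dg t) with (dg s * s * exp s / (t * exp t)).
      2:{ replace (dg s * s * exp s) with (t * dg t * exp t) by (rewrite Kt; ring). field. lra. }
      replace (exp (- t)) with (/ exp t).
      2:{ field_simplify_eq; [|lra]. lra. }
      match goal with |- ?a = ?b => change (@eq R a b) end. field. lra. }
  intros t Ht. assert (E := HL t Ht). unfold L in E. unfold I in E at 2. rewrite (RInt_point s (fun xi => exp (- xi) / xi)) in E.
  change (zero : R) with 0 in E. lra.
Qed.
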